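(* Let $K$ be a field and $L$ a $K$-space carrying an algebra $(L,\nabla,\eta)$ and a coalgebra $(L,\Delta,\epsilon)$ such that $\epsilon\circ\eta=\mathrm{id}_K$ and $\Delta\circ\eta=\eta\otimes\eta$. Let $1_L=\eta(1_K)$, $H=\mathrm{Hom}_K(L,L)$, $\underline H=\mathrm{Hom}_K(L\otimes L,L\otimes L)$, $H_1=\{f\in H\mid f(1_L)=1_L\}$, $\underline H_1=\{F\in\underline H\mid F(1_L\otimes1_L)=1_L\otimes1_L\}$, and let $s:\underline H\to H\otimes H$ be the split map $s(F)=F_1\otimes F_2$ with $F_1(x)=(\mathrm{id}_L\otimes\epsilon)(F(x\otimes1_L))$, $F_2(x)=(\epsilon\otimes\mathrm{id}_L)(F(1_L\otimes x))$. Then for every $f\in H_1$, $\Delta\circ f\circ\nabla\in\underline H_1$ and $s(\Delta\circ f\circ\nabla)=f\otimes f$. Moreover, for any linearly independent set $\mathcal B\subseteq H_1$ with span $H_{\mathcal B}$, defining $\Delta_{\mathcal B}(\sum_b x_b b)=\sum_b x_b\,b\otimes b$ and $\epsilon_{\mathcal B}(f)=\epsilon(f(1_L))$, $(H_{\mathcal B},\Delta_{\mathcal B},\epsilon_{\mathcal B})$ is a coalgebra.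
   Context: The identifications $L\otimes K\cong L\cong K\otimes L$ are used in the definitions of $F_1,F_2$. *)

(* Defs.v *)
From HB Require Import structures.
From mathcomp Require Import all_boot all_algebra.
From mathcomp Require Import boolp classical_sets functions.
From Stdlib Require Import ClassicalEpsilon.


Import GRing.Theory.
Local Open Scope ring_scope.

(* Tensor products of K-vector spaces, given by their universal property.   *)
Record tensor_product {K : fieldType} (V W : lmodType K) := TensorProduct {
  tp_space : lmodType K;
  tp_mul : V -> W -> tp_space;
  tp_mul_linl : forall w, linear (fun v => tp_mul v w);
  tp_mul_linr : forall v, linear (tp_mul v);
  tp_universal : forall (U : lmodType K) (g : V -> W -> U),
    (forall w, linear (fun v => g v w)) -> (forall v, linear (g v)) ->
    exists! h : tp_space -> U, linear h /\ (forall v w, h (tp_mul v w) = g v w)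
}.
Coercion tp_space : tensor_product >-> lmodType.
Arguments tp_space {K V W} t.
Arguments tp_mul {K V W} t _ _.

Definition tlift {K : fieldType} {V W : lmodType K} (T : tensor_product V W)
    {U : lmodType K} (g : V -> W -> U) : T -> U :=
  epsilon (inhabits (fun _ => 0))
    (fun h : T -> U => linear h /\ (forall v w, h (tp_mul T v w) = g v w)).

Definition tmap {K : fieldType} {V W V' W' : lmodType K}
    (T : tensor_product V W) (T' : tensor_product V' W')
    (f : V -> V') (g : W -> W') : T -> T' :=
  tlift T (fun v w => tp_mul T' (f v) (g w)).

Definition tassoc {K : fieldType} {U V W : lmodType K}
    {T : tensor_product U V} (Tl : tensor_product T W)
    {T' : tensor_product V W} (Tr : tensor_product U T') : Tl -> Tr :=
  epsilon (inhabits (fun _ => 0))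
    (fun h : Tl -> Tr => linear h /\
       (forall u v w, h (tp_mul Tl (tp_mul T u v) w) = tp_mul Tr u (tp_mul T' v w))).

(* Algebras and coalgebras over K (K (x) A and A (x) K identified with A).  *)
Definition is_algebra {K : fieldType} {A : lmodType K}
    {T : tensor_product A A} (Tl : tensor_product T A) (Tr : tensor_product A T)
    (m : T -> A) (u : K -> A) : Prop :=
  [/\ linear m, linear (u : K^o -> A),
      (forall t : Tl, m (tmap Tl T m id t) = m (tmap Tr T id m (tassoc Tl Tr t))),
      (forall k x, m (tp_mul T (u k) x) = k *: x) &
      (forall k x, m (tp_mul T x (u k)) = k *: x)].

Definition is_coalgebra {K : fieldType} {C : lmodType K}
    {T : tensor_product C C} (Tl : tensor_product T C) (Tr : tensor_product C T)
    (D : C -> T) (e : C -> K) : Prop :=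
  [/\ linear D, scalar e,
      (forall x, tassoc Tl Tr (tmap T Tl D id (D x)) = tmap T Tr id D (D x)),
      (forall x, tlift T (fun a b => e a *: b) (D x) = x) &
      (forall x, tlift T (fun a b => e b *: a) (D x) = x)].

(* Hom_K(U, V) as a K-space: the subspace of linear maps in U -> V.         *)
Definition linearb (K : fieldType) (U V : lmodType K) : {pred U -> V} :=
  fun f => `[< linear f >].

Lemma linearb_closed (K : fieldType) (U V : lmodType K) :
  subsemimod_closed (@linearb K U V).
Proof.
rewrite /linearb.
split; [split|].
- rewrite /in_mem /=; apply/asboolP => a x y /=.
  have -> : forall u : U, (0 : U -> V) u = 0 by [].
  by rewrite scaler0 addr0.
- move=> f g; rewrite /in_mem /= => /asboolP Lf /asboolP Lg; apply/asboolP => a x y.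
  have E : forall u : U, (f + g) u = f u + g u by [].
  by rewrite !E Lf Lg scalerDr !addrA (addrAC _ (f y)).
- move=> a f; rewrite /in_mem /= => /asboolP Lf; apply/asboolP => b x y.
  have E : forall u : U, (a *: f) u = a *: f u by [].
  by rewrite !E Lf scalerDr !scalerA mulrC.
Qed.

HB.instance Definition _ (K : fieldType) (U V : lmodType K) :=
  GRing.isSubmodClosed.Build K (U -> V) (@linearb K U V) (@linearb_closed K U V).

Record khom {K : fieldType} (U V : lmodType K) := KHom {
  hom_fun :> U -> V;
  _ : hom_fun \in @linearb K U V
}.
Arguments hom_fun {K U V} _ _.

HB.instance Definition _ (K : fieldType) (U V : lmodType K) :=
  [isSub for @hom_fun K U V].
HB.instance Definition _ (K : fieldType) (U V : lmodType K) :=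
  [Choice of khom U V by <:].
HB.instance Definition _ (K : fieldType) (U V : lmodType K) :=
  [SubChoice_isSubLmodule of khom U V by <:].

(* Packaging a function as an element of Hom (the zero map if not linear). *)
Definition mkhom {K : fieldType} {U V : lmodType K} (f : U -> V) : khom U V :=
  insubd 0 f.

Definition hom_unital {K : fieldType} {U : lmodType K} (one : U) : {pred khom U U} :=
  fun f => f one == one.

Definition split_hom {K : fieldType} {L : lmodType K} {TL : tensor_product L L}
    (eps : L -> K) (one : L) (TH : tensor_product (khom L L) (khom L L))
    (F : khom TL TL) : TH :=
  let F1 := fun x => tlift TL (fun a b => eps b *: a) (F (tp_mul TL x one)) in
  let F2 := fun x => tlift TL (fun a b => eps a *: b) (F (tp_mul TL one x)) in
  tp_mul TH (mkhom F1) (mkhom F2).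

Definition lin_indep {K : fieldType} {V : lmodType K} (B : set V) : Prop :=
  forall (s : seq V) (c : V -> K), uniq s -> (forall v, v \in s -> B v) ->
    \sum_(v <- s) c v *: v = 0 -> forall v, v \in s -> c v = 0.

Definition in_span {K : fieldType} {V : lmodType K} (B : set V) : {pred V} :=
  fun x => `[< exists s : seq (K * V),
                 (forall p, p \in s -> B p.2) /\ x = \sum_(p <- s) p.1 *: p.2 >].

Lemma in_span_closed (K : fieldType) (V : lmodType K) (B : set V) :
  subsemimod_closed (in_span B).
Proof.
split; [split|].
- by apply/asboolP; exists [::]; split => //; rewrite big_nil.
- move=> x y /asboolP[s [sB ->]] /asboolP[t [tB ->]]; apply/asboolP.
  exists (s ++ t); split; last by rewrite big_cat.
  by move=> p; rewrite mem_cat => /orP[/sB|/tB].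
- move=> a x /asboolP[s [sB ->]]; apply/asboolP.
  exists [seq (a * p.1, p.2) | p <- s]; split.
    by move=> p /mapP[q /sB Bq ->].
  by rewrite scaler_sumr big_map; apply: eq_bigr => p _; rewrite scalerA.
Qed.

HB.instance Definition _ (K : fieldType) (V : lmodType K) (B : set V) :=
  GRing.isSubmodClosed.Build K V (in_span B) (@in_span_closed K V B).

Record span_space {K : fieldType} {V : lmodType K} (B : set V) := SpanElt {
  span_val :> V;
  _ : span_val \in in_span B
}.
Arguments span_val {K V B} _.

HB.instance Definition _ (K : fieldType) (V : lmodType K) (B : set V) :=
  [isSub for (@span_val K V B)].
HB.instance Definition _ (K : fieldType) (V : lmodType K) (B : set V) :=
  [Choice of span_space B by <:].
HB.instance Definition _ (K : fieldType) (V : lmodType K) (B : set V) :=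
  [SubChoice_isSubLmodule of span_space B by <:].

Definition to_span {K : fieldType} {V : lmodType K} (B : set V) (x : V) :
  span_space B := insubd 0 x.

Definition DeltaB {K : fieldType} {V : lmodType K} {B : set V}
    (T : tensor_product (span_space B) (span_space B)) : span_space B -> T :=
  epsilon (inhabits (fun _ => 0))
    (fun D : span_space B -> T =>
       forall (s : seq V) (x : V -> K), uniq s -> (forall b, b \in s -> B b) ->
         D (to_span B (\sum_(b <- s) x b *: b))
         = \sum_(b <- s) x b *: tp_mul T (to_span B b) (to_span B b)).

Definition epsB {K : fieldType} {L : lmodType K} (eps : L -> K) (one : L)
    (B : set (khom L L)) : span_space B -> K :=
  fun f => eps ((span_val f : khom L L) one).

(* Main.v *)
Require Import Defs.
From HB Require Import structures.
From mathcomp Require Import all_boot all_algebra.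
From mathcomp Require Import boolp classical_sets functions.
From Stdlib Require Import ClassicalEpsilon.
Import GRing.Theory.
Local Open Scope ring_scope.

Section LinFacts.
Context {K : fieldType} {U V : lmodType K} {f : U -> V} (Lf : linear f).
Lemma lin0 : f 0 = 0.
Proof. have := Lf 1 0 0; rewrite scale1r addr0 => /eqP.
by rewrite scale1r -subr_eq0 opprD addrA addrN sub0r oppr_eq0 => /eqP. Qed.
Lemma linD x y : f (x + y) = f x + f y.
Proof. by have := Lf 1 x y; rewrite !scale1r. Qed.
Lemma linZ a x : f (a *: x) = a *: f x.
Proof. by have := Lf a x 0; rewrite !addr0 lin0 addr0. Qed.
Lemma lin_sum (I : Type) (r : seq I) (F : I -> U) :
  f (\sum_(i <- r) F i) = \sum_(i <- r) f (F i).
Proof. elim: r => [|i r IH]; first by rewrite !big_nil lin0.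
by rewrite !big_cons linD IH. Qed.
End LinFacts.

Lemma lin_comp (K : fieldType) (U V W : lmodType K) (f : U -> V) (g : V -> W) :
  linear f -> linear g -> linear (g \o f).
Proof. by move=> Lf Lg a x y /=; rewrite Lf Lg. Qed.

Lemma lin_id (K : fieldType) (U : lmodType K) : linear (@id U).
Proof. by []. Qed.

Section Tensor.
Context {K : fieldType} {V W : lmodType K} (T : tensor_product V W).
Lemma tp_linl a x y w : tp_mul T (a *: x + y) w = a *: tp_mul T x w + tp_mul T y w.
Proof. by have := tp_mul_linl _ _ T w a x y. Qed.
Lemma tp_linr a x y v : tp_mul T v (a *: x + y) = a *: tp_mul T v x + tp_mul T v y.
Proof. by have := tp_mul_linr _ _ T v a x y. Qed.

Lemma tlift_spec {U : lmodType K} {g : V -> W -> U} :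
  (forall w, linear (fun v => g v w)) -> (forall v, linear (g v)) ->
  linear (tlift T g) /\ (forall v w, tlift T g (tp_mul T v w) = g v w).
Proof.
move=> H1 H2; have [h [Hh _]] := tp_universal _ _ T _ _ H1 H2.
rewrite /tlift; exact (epsilon_spec _ (fun h : T -> U => linear h /\ (forall v w, h (tp_mul T v w) = g v w)) (ex_intro _ h Hh)).
Qed.

Lemma tlift_uniq {U : lmodType K} {g : V -> W -> U} {h : T -> U} :
  (forall w, linear (fun v => g v w)) -> (forall v, linear (g v)) ->
  linear h -> (forall v w, h (tp_mul T v w) = g v w) -> h = tlift T g.
Proof.
move=> H1 H2 Lh Ph; have [h0 [_ U0]] := tp_universal _ _ T _ _ H1 H2.
have [L1 P1] := tlift_spec H1 H2.
by rewrite -(U0 h) // -(U0 (tlift T g)).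
Qed.

Lemma tlift_uniq2 {U : lmodType K} {g : V -> W -> U} {h1 h2 : T -> U} :
  (forall w, linear (fun v => g v w)) -> (forall v, linear (g v)) ->
  linear h1 -> (forall v w, h1 (tp_mul T v w) = g v w) ->
  linear h2 -> (forall v w, h2 (tp_mul T v w) = g v w) -> h1 = h2.
Proof.
move=> H1 H2 L1 P1 L2 P2; by rewrite (tlift_uniq H1 H2 L1 P1) (tlift_uniq H1 H2 L2 P2).
Qed.
End Tensor.

Lemma tmap_spec (K : fieldType) (V W V' W' : lmodType K)
    (T : tensor_product V W) (T' : tensor_product V' W') (f : V -> V') (g : W -> W') :
  linear f -> linear g ->
  linear (tmap T T' f g) /\ (forall v w, tmap T T' f g (tp_mul T v w) = tp_mul T' (f v) (g w)).
Proof.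
move=> Lf Lg; apply: tlift_spec => [w a x y|v a x y] /=.
  by rewrite Lf tp_linl.
by rewrite Lg tp_linr.
Qed.

Lemma tassoc_spec (K : fieldType) (U V W : lmodType K)
    (T : tensor_product U V) (Tl : tensor_product T W)
    (T' : tensor_product V W) (Tr : tensor_product U T') :
  linear (tassoc Tl Tr) /\
  (forall u v w, tassoc Tl Tr (tp_mul Tl (tp_mul T u v) w) = tp_mul Tr u (tp_mul T' v w)).
Proof.
pose g w := fun u v => tp_mul Tr u (tp_mul T' v w).
have g1 : forall w v', linear (fun u => g w u v').
  by move=> w v' a x y; rewrite /g tp_linl.
have g2 : forall w u, linear (g w u).
  by move=> w u a x y; rewrite /g tp_linl tp_linr.
pose k w := tlift T (g w).
have kS w := tlift_spec T (g1 w) (g2 w).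
have kl : forall t, linear (fun w => k w t).
  move=> t a x y.
  have E : k (a *: x + y) = (fun t => a *: k x t + k y t).
    apply: (tlift_uniq2 T (g1 _) (g2 _)).
    - exact: (kS _).1.
    - exact: (kS _).2.
    - move=> b z z'; rewrite /k !(linD (kS _).1) !(linZ (kS _).1) !scalerDr !scalerA mulrC.
      by rewrite addrACA.
    - move=> u v; rewrite /k !(kS _).2 /g.
      by rewrite !tp_linr.
  by rewrite E.
have kr : forall w, linear (k w) by move=> w; exact: (kS w).1.
have [Lh Ph] := tlift_spec Tl (g := fun t w => k w t) kr kl.
set h := tlift Tl _ in Lh Ph.
have Hh : linear h /\ (forall u v w, h (tp_mul Tl (tp_mul T u v) w) = tp_mul Tr u (tp_mul T' v w)).
  split => // u v w; by rewrite Ph /k (kS w).2.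
rewrite /tassoc; exact (epsilon_spec _ (fun h : Tl -> Tr => linear h /\ (forall u v w, h (tp_mul Tl (tp_mul T u v) w) = tp_mul Tr u (tp_mul T' v w))) (ex_intro _ h Hh)).
Qed.

Arguments lin_comp {K U V W f g}.
Arguments tmap_spec {K V W V' W'} T T' {f g}.
Arguments tassoc_spec {K U V W T} Tl {T'} Tr.


Lemma val_lin (K : fieldType) (V : lmodType K) (B : set V) :
  linear (fun x : span_space B => span_val x).
Proof. by move=> a x y; rewrite GRing.valD GRing.valZ. Qed.

Definition coef {K : fieldType} {V : lmodType K} (ps : seq (K * V)) (b : V) : K :=
  \sum_(p <- ps | p.2 == b) p.1.

Lemma sum_pick1 (K : fieldType) (V W : lmodType K) (s : seq V) (i : V) (G : V -> W) :
  uniq s -> i \in s -> \sum_(b <- s) (if i == b then G b else 0) = G i.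
Proof.
move=> us iin; rewrite (bigD1_seq i) //= eqxx big1 ?addr0 // => b.
by rewrite eq_sym => /negbTE ->.
Qed.

Lemma sum_coef (K : fieldType) (V W : lmodType K) (F : V -> W) (ps : seq (K * V)) (s : seq V) :
  uniq s -> (forall p, p \in ps -> p.2 \in s) ->
  \sum_(p <- ps) p.1 *: F p.2 = \sum_(b <- s) coef ps b *: F b.
Proof.
move=> us; elim: ps => [|q ps IH] H.
  by rewrite big_nil big1 // => b _; rewrite /coef big_nil scale0r.
rewrite big_cons IH; last by move=> p pin; apply: H; rewrite inE pin orbT.
have E : forall b, coef (q :: ps) b *: F b = (if q.2 == b then q.1 *: F b else 0) + coef ps b *: F b.
  move=> b; rewrite /coef big_cons; case: eqP => _; first by rewrite scalerDl.
  by rewrite add0r.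
rewrite (eq_bigr _ (fun b _ => E b)).
rewrite big_split /= sum_pick1 //; last by apply: H; rewrite inE eqxx.
Qed.

Section Span.
Context {K : fieldType} {V : lmodType K} {B : set V}.
Notation ts := (to_span B).
Definition inB (ps : seq (K * V)) := forall p, p \in ps -> B p.2.

Lemma to_spanK v : v \in in_span B -> span_val (ts v) = v.
Proof. by move=> H; rewrite /to_span insubdK. Qed.

Lemma in_span_sum ps : inB ps -> \sum_(p <- ps) p.1 *: p.2 \in in_span B.
Proof. by move=> H; apply/asboolP; exists ps. Qed.

Lemma in_span_B b : B b -> b \in in_span B.
Proof.
move=> Bb; have := @in_span_sum [:: (1, b)].
rewrite big_seq1 scale1r; apply => p; rewrite inE => /eqP -> //.
Qed.

Lemma span_repr (x : span_space B) : exists ps, inB ps /\ span_val x = \sum_(p <- ps) p.1 *: p.2.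
Proof. have := valP x; by move=> /asboolP. Qed.

Lemma to_span_val (x : span_space B) : ts (span_val x) = x.
Proof. by rewrite /to_span valKd. Qed.

Lemma to_span_sum ps : inB ps -> ts (\sum_(p <- ps) p.1 *: p.2) = \sum_(p <- ps) p.1 *: ts p.2.
Proof.
move=> H; apply: val_inj; rewrite /= to_spanK; last exact: in_span_sum.
rewrite (lin_sum (@val_lin _ _ B)); apply: eq_big_seq => p pin.
by rewrite (linZ (@val_lin _ _ B)) to_spanK //; apply: in_span_B; apply: H.
Qed.

Lemma span_ext (W : lmodType K) (F1 F2 : span_space B -> W) :
  linear F1 -> linear F2 -> (forall b, B b -> F1 (ts b) = F2 (ts b)) -> forall x, F1 x = F2 x.
Proof.
move=> L1 L2 E x; have [ps [Hps Hx]] := span_repr x.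
rewrite -(to_span_val x) Hx to_span_sum // (lin_sum L1) (lin_sum L2).
by apply: eq_big_seq => p pin; rewrite (linZ L1) (linZ L2) E //; apply: Hps.
Qed.

Hypothesis Hind : lin_indep B.
Variable T : tensor_product (span_space B) (span_space B).
Definition tb b := tp_mul T (ts b) (ts b).
Definition Tsum ps := \sum_(p <- ps) p.1 *: tb p.2.

Lemma Tsum_wd ps qs : inB ps -> inB qs ->
  \sum_(p <- ps) p.1 *: p.2 = \sum_(p <- qs) p.1 *: p.2 -> Tsum ps = Tsum qs.
Proof.
move=> Hp Hq E.
set s := undup (map snd (ps ++ qs)).
have us : uniq s by apply: undup_uniq.
have sp : forall p, p \in ps -> p.2 \in s.
  by move=> p pin; rewrite mem_undup map_f // mem_cat pin.
have sq : forall p, p \in qs -> p.2 \in s.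
  by move=> p pin; rewrite mem_undup map_f // mem_cat pin orbT.
have sB : forall b, b \in s -> B b.
  move=> b; rewrite mem_undup => /mapP[p]; rewrite mem_cat => /orP[] pin ->.
    exact: Hp. exact: Hq.
rewrite (@sum_coef _ _ _ id _ _ us sp) (@sum_coef _ _ _ id _ _ us sq) in E.
have Z : \sum_(b <- s) (coef ps b - coef qs b) *: b = 0.
  under eq_bigr => b _ do rewrite scalerBl.
  by rewrite sumrB E subrr.
have C := Hind s (fun b => coef ps b - coef qs b) us sB Z.
rewrite /Tsum (@sum_coef _ _ _ tb _ _ us sp) (@sum_coef _ _ _ tb _ _ us sq).
apply: eq_big_seq => b bin; congr (_ *: _); apply/eqP; rewrite -subr_eq0; apply/eqP.
exact: C.
Qed.

Definition DSpec (D : span_space B -> T) :=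
  forall (s : seq V) (x : V -> K), uniq s -> (forall b, b \in s -> B b) ->
    D (ts (\sum_(b <- s) x b *: b)) = \sum_(b <- s) x b *: tp_mul T (ts b) (ts b).

Lemma DeltaB_spec : DSpec (DeltaB T).
Proof.
pose D0 (x : span_space B) := Tsum (proj1_sig (cid (span_repr x))).
have HD : DSpec D0.
  move=> s x us sB; rewrite /D0; case: cid => ps /= [Hps E].
  pose qs := map (fun b => (x b, b)) s.
  have Hq : inB qs by move=> p /mapP[b bin ->]; apply: sB.
  have Eq : \sum_(p <- qs) p.1 *: p.2 = \sum_(b <- s) x b *: b by rewrite big_map.
  rewrite (@Tsum_wd ps qs Hps Hq); first by rewrite /Tsum big_map.
  by rewrite -E Eq to_spanK // -Eq; apply: in_span_sum.
rewrite /DeltaB; exact (epsilon_spec _ DSpec (ex_intro _ D0 HD)).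
Qed.

Lemma DeltaB_Tsum ps : inB ps -> DeltaB T (ts (\sum_(p <- ps) p.1 *: p.2)) = Tsum ps.
Proof.
move=> H; set s := undup (map snd ps).
have us : uniq s by apply: undup_uniq.
have sp : forall p, p \in ps -> p.2 \in s by move=> p pin; rewrite mem_undup map_f.
have sB : forall b, b \in s -> B b by move=> b; rewrite mem_undup => /mapP[p pin ->]; apply: H.
rewrite (@sum_coef _ _ _ id _ _ us sp) DeltaB_spec // /Tsum (@sum_coef _ _ _ tb _ _ us sp).
done.
Qed.

Lemma DeltaB_gen b : B b -> DeltaB T (ts b) = tp_mul T (ts b) (ts b).
Proof.
move=> Bb; have := @DeltaB_Tsum [:: (1, b)].
rewrite big_seq1 scale1r /Tsum big_seq1 scale1r; apply => p; rewrite inE => /eqP -> //.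
Qed.

Lemma DeltaB_lin : linear (DeltaB T).
Proof.
move=> a x y.
have [ps [Hp Ex]] := span_repr x; have [qs [Hq Ey]] := span_repr y.
pose rs := map (fun p => (a * p.1, p.2)) ps ++ qs.
have Hr : inB rs.
  move=> p; rewrite mem_cat => /orP[/mapP[q qin ->]|pin]; [exact: Hp qin | exact: Hq pin].
have E : a *: x + y = ts (\sum_(p <- rs) p.1 *: p.2).
  apply: val_inj; rewrite /= to_spanK; last exact: in_span_sum.
  rewrite Ex Ey big_cat big_map scaler_sumr /=.
  by congr (_ + _); apply: eq_bigr => p _; rewrite scalerA.
rewrite E DeltaB_Tsum // -(to_span_val x) -(to_span_val y) Ex Ey !DeltaB_Tsum //.
rewrite /Tsum big_cat big_map scaler_sumr /=.
by congr (_ + _); apply: eq_bigr => p _; rewrite scalerA.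
Qed.
End Span.


Theorem proposition4p9 (K : fieldType) (L : lmodType K)
    (TL : tensor_product L L) (TLl : tensor_product TL L) (TLr : tensor_product L TL)
    (nabla : TL -> L) (eta : K -> L) (Delta : L -> TL) (eps : L -> K) :
  is_algebra TLl TLr nabla eta ->
  is_coalgebra TLl TLr Delta eps ->
  (forall k, eps (eta k) = k) ->
  (forall k, Delta (eta k) = tp_mul TL (eta k) (eta 1)) ->
  let one := eta 1 in
  (forall (TH : tensor_product (khom L L) (khom L L)) (f : khom L L),
     f \in hom_unital one ->
     exists G : khom TL TL,
       (G : TL -> TL) = Delta \o f \o nabla /\
       G \in hom_unital (tp_mul TL one one) /\
       split_hom eps one TH G = tp_mul TH f f) /\
  (forall B : set (khom L L),
     lin_indep B -> (forall b, B b -> b \in hom_unital one) ->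
     forall (TB : tensor_product (span_space B) (span_space B))
            (TBl : tensor_product TB (span_space B))
            (TBr : tensor_product (span_space B) TB),
       is_coalgebra TBl TBr (DeltaB TB) (epsB eps one B)).
Proof.
move=> [Lnab Leta Ass UL UR] [LD Seps Coas CL CR] Heps HDeta one.
have nabR x : nabla (tp_mul TL x one) = x by rewrite UR scale1r.
have nabL x : nabla (tp_mul TL one x) = x by rewrite UL scale1r.
split.
  move=> TH f fu.
  have fone : f one = one by move: fu; rewrite unfold_in => /eqP.
  have Lf : linear f by have := valP f; rewrite unfold_in => /asboolP.
  have LG := lin_comp (lin_comp Lnab Lf) LD : linear (Delta \o f \o nabla).
  have HG : hom_fun (mkhom (Delta \o f \o nabla)) = Delta \o f \o nabla.
    by rewrite /mkhom insubdK //; rewrite unfold_in; apply/asboolP.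
  exists (mkhom (Delta \o f \o nabla)); split => //; split.
    by rewrite unfold_in HG /= nabR fone HDeta.
  rewrite /split_hom HG /=.
  have -> : (fun x => tlift TL (fun a b => eps b *: a) (Delta (f (nabla (tp_mul TL x one))))) = hom_fun f.
    by apply: funext => x; rewrite nabR CR.
  have -> : (fun x => tlift TL (fun a b => eps a *: b) (Delta (f (nabla (tp_mul TL one x))))) = hom_fun f.
    by apply: funext => x; rewrite nabL CL.
  by rewrite /mkhom valKd.
move=> B Hind Bu TB TBl TBr.
have Leps : scalar (epsB eps one B).
  move=> a x y; rewrite /epsB /=.
  exact: (Seps a (hom_fun (span_val x) one) (hom_fun (span_val y) one)).
have epsg : forall b, B b -> epsB eps one B (to_span B b) = 1.
  move=> b Bb; rewrite /epsB to_spanK; last exact: in_span_B.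
  by have := Bu b Bb; rewrite unfold_in => /eqP ->; rewrite Heps.
have LDB := DeltaB_lin Hind TB.
have l1 : forall w : span_space B, linear (fun a => epsB eps one B a *: w).
  by move=> z k u v /=; rewrite Leps scalerDl scalerA.
have l2 : forall a : span_space B, linear (fun w : span_space B => epsB eps one B a *: w).
  by move=> z k u v /=; rewrite scalerDr !scalerA mulrC.
have l3 : forall w : span_space B, linear (fun a : span_space B => epsB eps one B w *: a).
  by move=> z k u v /=; rewrite scalerDr !scalerA mulrC.
have l4 : forall a : span_space B, linear (fun w => epsB eps one B w *: a).
  by move=> z k u v /=; rewrite Leps scalerDl scalerA.
have [Lm1 Pm1] := tmap_spec TB TBl LDB (@lin_id _ (span_space B)).
have [Lm2 Pm2] := tmap_spec TB TBr (@lin_id _ (span_space B)) LDB.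
have [La Pa] := tassoc_spec TBl TBr.
split => //.
- move=> x.
  apply: (@span_ext _ _ B _ (fun x => tassoc TBl TBr (tmap TB TBl (DeltaB TB) id (DeltaB TB x)))
           (fun x => tmap TB TBr id (DeltaB TB) (DeltaB TB x))).
  + exact: lin_comp LDB (lin_comp Lm1 La).
  + exact: lin_comp LDB Lm2.
  + by move=> b Bb /=; rewrite !(DeltaB_gen Hind) // Pm1 Pm2 (DeltaB_gen Hind) // Pa.
- move=> x; have [Lt Pt] := tlift_spec TB l1 l2.
  apply: (@span_ext _ _ B _ (fun x => tlift TB (fun a b => epsB eps one B a *: b) (DeltaB TB x)) id).
  + exact: lin_comp LDB Lt.
  + exact: lin_id.
  + by move=> b Bb /=; rewrite (DeltaB_gen Hind) // Pt epsg // scale1r.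
- move=> x; have [Lt Pt] := tlift_spec TB (g := fun a b => epsB eps one B b *: a) l3 l4.
  apply: (@span_ext _ _ B _ (fun x => tlift TB (fun a b => epsB eps one B b *: a) (DeltaB TB x)) id).
  + exact: lin_comp LDB Lt.
  + exact: lin_id.
  + by move=> b Bb /=; rewrite (DeltaB_gen Hind) // Pt epsg // scale1r.
Qed.
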